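(* Let $d\in\mathbb{N}$, $a<b$, $\alpha\in[0,1]$, $\rho\in\mathbb{R}^{d\times d}$ an invertible diagonal matrix, and $H:\mathbb{R}^d\times\mathbb{R}^d\to\mathbb{R}$, $(z,p_z)\mapsto H(z,p_z)$, a $C^1$ function that is even in its second variable, $H(z,-p_z)=H(z,p_z)$. Consider the systems, for smooth curves on $[a,b]$, $$\text{(a)}\quad \dot x=\frac{\partial H}{\partial p_x}(x,p_x),\quad D^\alpha_-x=-\rho^{-1}p^\alpha_y,\quad \dot p_x=-\frac{\partial H}{\partial x}(x,p_x)+D^\alpha_-p^\alpha_y,$$ $$\text{(b)}\quad \dot y=\frac{\partial H}{\partial p_y}(y,p_y),\quad D^\alpha_+y=-\rho^{-1}p^\alpha_x,\quad \dot p_y=-\frac{\partial H}{\partial y}(y,p_y)+D^\alpha_+p^\alpha_x.$$ Let $x,p_x,p^\alpha_y:[a,b]\to\mathbb{R}^d$ be smooth and set $y(t):=x(a+b-t)$, $p_y(t):=-p_x(a+b-t)$, $p^\alpha_x(t):=p^\alpha_y(a+b-t)$ (equivalently $p^\alpha_y(t)=p^\alpha_x(a+b-t)$). Then system (b) is system (a) in reversed time $\tilde t=a+b-t$: each equation of (b) holds at time $t$ if and only if the corresponding equation of (a) holds at time $\tilde t=a+b-t$.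
   Context: For $f:[a,b]\to\mathbb{R}$ (componentwise for vector-valued functions), $D^\alpha_-f(t)=\frac{1}{\Gamma(1-\alpha)}\frac{d}{dt}\int_a^t(t-\tau)^{-\alpha}f(\tau)\,d\tau$ and $D^\alpha_+f(t)=-\frac{1}{\Gamma(1-\alpha)}\frac{d}{dt}\int_t^b(\tau-t)^{-\alpha}f(\tau)\,d\tau$ (Riemann–Liouville fractional derivatives). Systems (a),(b) are the restricted fractional Hamilton equations for the Hamiltonian $H(x,p_x)+H(y,p_y)-p^\alpha_x\,\rho^{-1}\,p^\alpha_y$. *)

(* Defs.v *)
From mathcomp Require Import all_boot all_order all_algebra.
From mathcomp Require Import all_classical all_reals all_analysis.
Set Implicit Arguments. Unset Strict Implicit. Unset Printing Implicit Defensive.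
Import Order.TTheory GRing.Theory Num.Theory.
Import numFieldNormedType.Exports.
Local Open Scope classical_set_scope.
Local Open Scope ring_scope.

Definition Gamma_fn {R : realType} (s : R) : R :=
  fine (\int[@lebesgue_measure R]_(u in `]0%R, +oo[%classic)
          ((u `^ (s - 1)) * expR (- u))%:E).

(* For alpha = 1 the standard convention D^1_- f = f' is used. *)
Definition RL_left {R : realType} (a alpha : R) (f : R -> R) (t : R) : R :=
  if alpha == 1 then derive1 f t
  else (Gamma_fn (1 - alpha))^-1 *
       derive1 (fun s => Rintegral (@lebesgue_measure R) `[a, s]%classic
                    (fun tau => (s - tau) `^ (- alpha) * f tau)) t.

(* Right Riemann-Liouville derivative:
   D^alpha_+ f(t) = -1/Gamma(1-alpha) d/dt int_t^b (tau-t)^(-alpha) f(tau) dtau.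
   For alpha = 1 the standard convention D^1_+ f = - f' is used. *)
Definition RL_right {R : realType} (b alpha : R) (f : R -> R) (t : R) : R :=
  if alpha == 1 then - derive1 f t
  else - ((Gamma_fn (1 - alpha))^-1 *
       derive1 (fun s => Rintegral (@lebesgue_measure R) `[s, b]%classic
                    (fun tau => (tau - s) `^ (- alpha) * f tau)) t).

Definition RLv_left {R : realType} {d : nat} (a alpha : R)
  (F : R -> 'cV[R]_d) (t : R) : 'cV[R]_d :=
  \col_i RL_left a alpha (fun s => F s i 0) t.

Definition RLv_right {R : realType} {d : nat} (b alpha : R)
  (F : R -> 'cV[R]_d) (t : R) : 'cV[R]_d :=
  \col_i RL_right b alpha (fun s => F s i 0) t.

Definition dotv {R : realType} {d : nat} (F : R -> 'cV[R]_d) (t : R) : 'cV[R]_d :=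
  \col_i derive1 (fun s => F s i 0) t.

Definition dHdz {R : realType} {d : nat} (H : 'cV[R]_d -> 'cV[R]_d -> R)
  (z p : 'cV[R]_d) : 'cV[R]_d :=
  \col_i derive1 (fun s => H (z + s *: delta_mx i 0) p) 0.

Definition dHdp {R : realType} {d : nat} (H : 'cV[R]_d -> 'cV[R]_d -> R)
  (z p : 'cV[R]_d) : 'cV[R]_d :=
  \col_i derive1 (fun s => H z (p + s *: delta_mx i 0)) 0.

Definition C1_hamiltonian {R : realType} {d : nat}
  (H : 'cV[R]_d -> 'cV[R]_d -> R) : Prop :=
  forall i : 'I_d,
    (forall z p : 'cV[R]_d,
        derivable (fun s : R => H (z + s *: delta_mx i 0) p) 0 1 /\
        derivable (fun s : R => H z (p + s *: delta_mx i 0)) 0 1) /\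
    continuous (fun q : 'cV[R]_d * 'cV[R]_d => dHdz H q.1 q.2 i 0) /\
    continuous (fun q : 'cV[R]_d * 'cV[R]_d => dHdp H q.1 q.2 i 0).

Definition smooth_fun {R : realType} (f : R -> R) : Prop :=
  forall (n : nat) (t : R), derivable (iter n (fun g : R -> R => derive1 g) f) t 1.

Definition smooth_curve {R : realType} {d : nat} (F : R -> 'cV[R]_d) : Prop :=
  forall i : 'I_d, smooth_fun (fun s => F s i 0).

Definition sysA1 {R : realType} {d : nat} (H : 'cV[R]_d -> 'cV[R]_d -> R)
  (x px : R -> 'cV[R]_d) (t : R) : Prop :=
  dotv x t = dHdp H (x t) (px t).
Definition sysA2 {R : realType} {d : nat} (a alpha : R) (rho : 'M[R]_d)
  (x pya : R -> 'cV[R]_d) (t : R) : Prop :=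
  RLv_left a alpha x t = - (invmx rho *m pya t).
Definition sysA3 {R : realType} {d : nat} (a alpha : R)
  (H : 'cV[R]_d -> 'cV[R]_d -> R) (x px pya : R -> 'cV[R]_d) (t : R) : Prop :=
  dotv px t = - dHdz H (x t) (px t) + RLv_left a alpha pya t.

Definition sysB1 {R : realType} {d : nat} (H : 'cV[R]_d -> 'cV[R]_d -> R)
  (y py : R -> 'cV[R]_d) (t : R) : Prop :=
  dotv y t = dHdp H (y t) (py t).
Definition sysB2 {R : realType} {d : nat} (b alpha : R) (rho : 'M[R]_d)
  (y pxa : R -> 'cV[R]_d) (t : R) : Prop :=
  RLv_right b alpha y t = - (invmx rho *m pxa t).
Definition sysB3 {R : realType} {d : nat} (b alpha : R)
  (H : 'cV[R]_d -> 'cV[R]_d -> R) (y py pxa : R -> 'cV[R]_d) (t : R) : Prop :=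
  dotv py t = - dHdz H (y t) (py t) + RLv_right b alpha pxa t.

(* Main.v *)
Require Import Defs.
From mathcomp Require Import all_boot all_order all_algebra.
From mathcomp Require Import all_classical all_reals all_analysis.
From mathcomp Require Import measurable_realfun.
From mathcomp Require Import lra ring.
Import Order.TTheory GRing.Theory Num.Theory.
Import numFieldNormedType.Exports.
Local Open Scope classical_set_scope.
Local Open Scope ring_scope.

Lemma oppr_dnbhs0 (R : realType) : (fun h : R => - h) @ (0:R)^' --> (0:R)^'.
Proof.
move=> P /= [e /= e0 HP]; exists e => //= y hy yn0; apply: HP.
  by move: hy; rewrite /ball_ /= !sub0r !normrN.
by rewrite oppr_eq0.
Qed.

Lemma derive1_refl (R : realType) (f : R -> R) (c t : R) :
  derive1 (fun s => f (c - s)) t = - derive1 f (c - t).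
Proof.
rewrite /derive1.
set q := (fun h : R => h^-1 *: (f (h + (c - t)) - f (c - t))).
rewrite [X in lim (X @ _)](_ : _ = (fun h => - q (- h))); last first.
  apply/funext => h; rewrite /q invrN scaleNr opprK; congr (_ *: (f _ - _)).
  by rewrite opprD addrA [c - h]addrC addrA.
have q2 : q = (fun h => - (- q (- (- h)))) by apply/funext => h; rewrite !opprK.
have key : forall (g : R -> R) l, g @ 0^' --> l -> (fun h => - g (- h)) @ 0^' --> - l.
  move=> g l gl; apply: cvgN.
  exact: (cvg_comp _ _ (oppr_dnbhs0 R) gl).
have [cq|ncq] := pselect (cvg (q @ 0^')).
  by apply: cvg_lim => //; exact: key.
have ncg : forall l : R, ~ ((fun h => - q (- h)) @ 0^' --> l).
  move=> l gl; apply: ncq; apply: (cvgP (- l)).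
  rewrite {1}q2; exact: (key (fun h => - q (- h)) l gl).
have ncq' : forall l : R, ~ (q @ 0^' --> l).
  by move=> l ql; apply: ncq; apply: (cvgP l).
rewrite /lim /lim_in !xgetPN //.
by rewrite /point /= oppr0.
Qed.

Section refl.
Local Open Scope ereal_scope.
Lemma integral_refl (R : realType) (h : R -> R) (c s b : R) :
  measurable_fun setT h ->
  \int[@lebesgue_measure R]_(x in `[s, b]) (h (c - x)%R)%:E =
  \int[@lebesgue_measure R]_(x in `[(c - b)%R, (c - s)%R]) (h x)%:E.
Proof.
move=> mh.
pose phi := fun x : R => (c - x)%R.
have mphi : measurable_fun setT phi.
  by apply: measurable_funB => //.
have pre : phi @^-1` `[(c - b)%R, (c - s)%R]%classic = `[s, b]%classic.
  by apply/seteqP; split => x /=; rewrite !in_itv /= /phi !lerD2l !lerN2 andbC.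
have pf : forall A, measurable A -> pushforward (@lebesgue_measure R) phi A = lebesgue_measure A.
  move=> A mA; apply/esym.
  apply: (@lebesgue_measure_unique R (@measure_function_pushforward__canonical__measure_function_Measure _ _ _ (measurableTypeR R) R (@lebesgue_measure R) phi mphi)) => //.
  move=> _ [[u v] _ <-] /=.
  change (lebesgue_measure `]u, v]%classic = lebesgue_measure (phi @^-1` `]u, v]%classic)).
  have -> : phi @^-1` `]u, v]%classic = `[(c - v)%R, (c - u)%R[%classic.
    by apply/seteqP; split=> x /=; rewrite !in_itv /= /phi => /andP[h1 h2]; apply/andP; split; lra.
  rewrite !lebesgue_measure_itv /= !lte_fin.
  have -> : (c - v < c - u)%R = (u < v)%R by rewrite ltrD2l ltrN2.
  by case: ifP => // _; rewrite -!EFinB; congr EFin; ring.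
rewrite -pre.
have T1 : forall g : R -> \bar R, measurable_fun setT g -> (forall x, 0 <= g x) ->
    \int[lebesgue_measure]_(x in phi @^-1` `[(c - b)%R, (c - s)%R]) (g \o phi) x =
    \int[lebesgue_measure]_(x in `[(c - b)%R, (c - s)%R]) g x.
  move=> g mg g0; rewrite -(@ge0_integral_pushforward _ _ (measurableTypeR R) (measurableTypeR R) R phi mphi (@lebesgue_measure R)) //.
  - by apply: eq_measure_integral => A mA _; exact: pf.
  - exact: measurable_funTS.
transitivity (\int[lebesgue_measure]_(x in phi @^-1` `[(c - b)%R, (c - s)%R]) ((EFin \o h) \o phi) x) => //.
have mEh : measurable_fun setT (EFin \o h) by exact/measurable_EFinP.
rewrite integralE funepos_comp funeneg_comp !T1 -?integralE //.
- exact: measurable_funeneg.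
- exact: measurable_funepos.
Qed.
End refl.

Lemma RL_refl (R : realType) (a b alpha : R) (f : R -> R) (t : R) :
  measurable_fun setT f ->
  RL_right b alpha (fun s => f (a + b - s)) t = RL_left a alpha f (a + b - t).
Proof.
move=> mf; rewrite /RL_right /RL_left; case: ifP => _.
  by rewrite derive1_refl opprK.
set IA := (fun r : R => Rintegral (@lebesgue_measure R) `[a, r]%classic
                    (fun tau => (r - tau) `^ (- alpha) * f tau)).
rewrite (_ : (fun s => _) = (fun s => IA (a + b - s))); last first.
  apply/funext => s; rewrite /IA /Rintegral; congr fine.
  transitivity (\int[@lebesgue_measure R]_(x in `[s, b]) ((fun u => ((a + b - s) - u) `^ (- alpha) * f u) (a + b - x))%:E)%E.
    apply: eq_integral => x _ /=.
    by rewrite (_ : (a + b - s - (a + b - x))%R = (x - s)%R) //; ring.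
  rewrite (@integral_refl R (fun u => ((a + b - s) - u) `^ (- alpha) * f u) (a + b)); first by rewrite addrK.
  apply: measurable_funM => //.
  apply: (measurableT_comp (measurable_powR _)).
  exact: measurable_funB.
by rewrite derive1_refl mulrN opprK.
Qed.

Lemma smooth_meas (R : realType) (d : nat) (F : R -> 'cV[R]_d) (i : 'I_d) :
  smooth_curve F -> measurable_fun setT (fun s => F s i 0).
Proof.
move=> sF; apply: continuous_measurable_fun => u.
apply: differentiable_continuous; apply/derivable1_diffP.
exact: (sF i 0%N u).
Qed.

Lemma dotv_refl (R : realType) (d : nat) (F : R -> 'cV[R]_d) (c t : R) :
  dotv (fun s => F (c - s)) t = - dotv F (c - t).
Proof. by apply/matrixP => i j; rewrite !mxE; exact: (@derive1_refl _ (fun u => F u i 0) c t). Qed.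

Lemma dotvN (R : realType) (d : nat) (F : R -> 'cV[R]_d) (t : R) :
  smooth_curve F -> dotv (fun s => - F s) t = - dotv F t.
Proof.
move=> sF; apply/matrixP => i j; rewrite !mxE.
rewrite (_ : (fun s => (- F s) i 0) = - (fun s => F s i 0)); last first.
  by apply/funext => s; rewrite !mxE.
by rewrite !derive1E deriveN //; exact: (sF i 0%N t).
Qed.

Lemma dHdp_neg (R : realType) (d : nat) (H : 'cV[R]_d -> 'cV[R]_d -> R) z p :
  (forall z p : 'cV[R]_d, H z (- p) = H z p) ->
  dHdp H z (- p) = - dHdp H z p.
Proof.
move=> He; apply/matrixP => i j; rewrite !mxE.
rewrite (_ : (fun s => H z (- p + s *: delta_mx i 0)) =
             (fun s => (fun u => H z (p + u *: delta_mx i 0)) (0 - s))); last first.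
  by apply/funext => s; rewrite -He opprD opprK sub0r scaleNr.
by rewrite (@derive1_refl _ (fun u => H z (p + u *: delta_mx i 0)) 0 0) subr0.
Qed.

Lemma dHdz_neg (R : realType) (d : nat) (H : 'cV[R]_d -> 'cV[R]_d -> R) z p :
  (forall z p : 'cV[R]_d, H z (- p) = H z p) ->
  dHdz H z (- p) = dHdz H z p.
Proof.
move=> He; apply/matrixP => i j; rewrite !mxE.
by congr derive1; apply/funext => s; rewrite He.
Qed.

Lemma RLv_refl (R : realType) (d : nat) (a b alpha : R) (F : R -> 'cV[R]_d) (t : R) :
  smooth_curve F ->
  RLv_right b alpha (fun s => F (a + b - s)) t = RLv_left a alpha F (a + b - t).
Proof.
move=> sF; apply/matrixP => i j; rewrite !mxE.
exact: (@RL_refl _ a b alpha _ t (@smooth_meas _ _ F i sF)).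
Qed.


Theorem proposition3p13 (R : realType) (d : nat) (a b alpha : R)
  (rho : 'M[R]_d) (H : 'cV[R]_d -> 'cV[R]_d -> R)
  (x px pya y py pxa : R -> 'cV[R]_d) :
  a < b -> 0 <= alpha <= 1 ->
  is_diag_mx rho -> rho \in unitmx ->
  C1_hamiltonian H ->
  (forall z p : 'cV[R]_d, H z (- p) = H z p) ->
  smooth_curve x -> smooth_curve px -> smooth_curve pya ->
  (forall t, y t = x (a + b - t)) ->
  (forall t, py t = - px (a + b - t)) ->
  (forall t, pxa t = pya (a + b - t)) ->
  forall t : R, a <= t <= b ->
    (sysB1 H y py t <-> sysA1 H x px (a + b - t)) /\
    (sysB2 b alpha rho y pxa t <-> sysA2 a alpha rho x pya (a + b - t)) /\
    (sysB3 b alpha H y py pxa t <-> sysA3 a alpha H x px pya (a + b - t)).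

Proof.
move=> ab al diag unit C1 He sx spx spya Hy Hpy Hpxa t tab.
have ey : y = (fun s => x (a + b - s)) by apply/funext.
have epy : py = (fun s => - px (a + b - s)) by apply/funext.
have epxa : pxa = (fun s => pya (a + b - s)) by apply/funext.
rewrite /sysB1 /sysA1 /sysB2 /sysA2 /sysB3 /sysA3 ey epy epxa /=.
rewrite dotv_refl dHdp_neg // RLv_refl // RLv_refl //.
rewrite (@dotv_refl _ _ (fun u => - px u) (a + b) t) (@dotvN _ _ px) // opprK.
rewrite dHdz_neg //.
split; first by split => [/oppr_inj | ->].
by [].
Qed.
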